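(* EpochPOP, as described in the context, is free from use-after-free errors: no node freed by a reclaiming thread is subsequently accessed by any thread.
   Context: Setting: an asynchronous shared-memory system with a fixed set of threads operating on a linked concurrent data structure; each unlinked node is retired by exactly one thread. EpochPOP: there is a shared monotonically increasing global epoch (incremented periodically at operation starts) and a shared array reservedEpoch with one slot per thread. At the start of each operation a thread writes the current global epoch into its reservedEpoch slot; at the end it writes a maximal value MAX and clears its local reservations. During an operation, nodes are accessed only through a read(ptrAddr, slot) call that repeatedly loads the pointer at ptrAddr, stores it in a private local reservation slot (no fence, not published), and re-loads until the loads agree (hazard-pointer style usage, so that a returned node was not retired at the time of validation). Each thread also has a row of a shared reservation array and a shared counter publishCounter. On retire, a thread records the current global epoch as the node's retire epoch and appends it to its retire list; periodically it frees every node in its retire list whose retire epoch is smaller than the minimum value in reservedEpoch; if afterwards the retire list is still at least a fixed multiple of the threshold, it records all publishCounters, sends a POSIX signal to every other thread (whose handler copies its local reservations into its shared slots and increments its publishCounter), waits until all other publishCounters have increased, and frees every node of its retire list not among the published reservations. Assumption: after being signalled, a thread publishes its reservations within bounded time. *)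

(* Defs.v *)
From mathcomp Require Import all_boot.

Set Implicit Arguments.
Unset Strict Implicit.
Unset Printing Implicit Defensive.

(* Nodes are abstract identifiers (a node is never re-identified after free). *)
Definition Node := nat.

(* A pointer location: [(None, k)] is the k-th root pointer of the data
   structure, [(Some n, k)] is the k-th pointer field of node [n]. *)
Definition Addr := (option Node * nat)%type.

Inductive Resv := RE of nat | RMax.

Definition lt_resv (e : nat) (r : Resv) : bool :=
  match r with RE x => e < x | RMax => true end.

(* Reclamation phase of a thread: idle, or waiting for the publish counters
   of the other threads to exceed the recorded values [rec]. *)
Inductive Phase (N : nat) := Idle | Waiting of ('I_N -> nat).
Arguments Idle {N}.

Definition upd (A : eqType) (B : Type) (f : A -> B) (x : A) (v : B) : A -> B :=
  fun y => if y == x then v else f y.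

Record state (N K : nat) := mkState {
  gEpoch         : nat;
  reservedEpoch  : 'I_N -> Resv;
  active         : 'I_N -> bool;
  localRes       : 'I_N -> 'I_K -> option Node;
  pendRead       : 'I_N -> option ('I_K * Addr); (* read(ptrAddr, slot) in progress *)
  retireList     : 'I_N -> seq (Node * nat);     (* retire list: (node, retire epoch) *)
  phase          : 'I_N -> Phase N;
  sigPending     : 'I_N -> bool;
  publishedRes   : 'I_N -> 'I_K -> option Node;
  publishCounter : 'I_N -> nat;
  mem            : Addr -> option Node;
  ghostRetired   : seq Node;
  ghostFreed     : seq Node
}.

Definition init_state (N K : nat) (m0 : Addr -> option Node) : state N K :=
  {| gEpoch := 0; reservedEpoch := fun _ => RMax; active := fun _ => false;
     localRes := fun _ _ => None; pendRead := fun _ => None;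
     retireList := fun _ => [::]; phase := fun _ => Idle;
     sigPending := fun _ => false; publishedRes := fun _ _ => None;
     publishCounter := fun _ => 0; mem := m0;
     ghostRetired := [::]; ghostFreed := [::] |}.

Section Model.
Variables (N K : nat).
(* The reclamation trigger: signal-based reclamation is only started when the
   retire list has at least [mult * threshold] entries. *)
Variables (mult threshold : nat).

Inductive label :=
| LOpStart of 'I_N & bool          (* bool: increment the global epoch first *)
| LOpEnd of 'I_N
| LReadStart of 'I_N & 'I_K & Addr (* load ptrAddr and store into the slot *)
| LReadValidate of 'I_N & Addr     (* re-load ptrAddr and compare *)
| LWrite of 'I_N & Addr & option Node
| LDeref of 'I_N & Node            (* any other access to a node *)
| LRetire of 'I_N & Node
| LEpochReclaim of 'I_N
| LSignalStart of 'I_N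
| LHandler of 'I_N
| LSignalFree of 'I_N.

Definition accessed (l : label) : option Node :=
  match l with
  | LReadStart _ _ a => a.1
  | LReadValidate _ a => a.1
  | LWrite _ a _ => a.1
  | LDeref _ n => Some n
  | _ => None
  end.

Definition holds_except (s : state N K) (t : 'I_N) (i : option 'I_K) (n : Node) : Prop :=
  exists j : 'I_K, Some j != i /\ localRes s t j = Some n.

(* [a] may be dereferenced by [t]: a root, or a field of a node that [t]
   holds in a (validated) local reservation slot. *)
Definition addr_ok (s : state N K) (t : 'I_N) (i : option 'I_K) (a : Addr) : Prop :=
  match a.1 with None => True | Some n => holds_except s t i n end.

Definition ready (s : state N K) (t : 'I_N) : Prop :=
  pendRead s t = None /\ phase s t = Idle.

Definition epoch_freeable (s : state N K) (e : nat) : bool :=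
  [forall u, lt_resv e (reservedEpoch s u)].

Definition signal_freeable (s : state N K) (t : 'I_N) (n : Node) : bool :=
  [forall u, (u != t) ==> [forall j, publishedRes s u j != Some n]] &&
  [forall j, localRes s t j != Some n].

Inductive step : state N K -> label -> state N K -> Prop :=
| StOpStart s t (inc : bool) :
    ~~ active s t -> ready s t ->
    let e := gEpoch s + inc in
    step s (LOpStart t inc)
      {| gEpoch := e; reservedEpoch := upd (reservedEpoch s) t (RE e);
         active := upd (active s) t true; localRes := localRes s;
         pendRead := pendRead s; retireList := retireList s; phase := phase s;
         sigPending := sigPending s; publishedRes := publishedRes s;
         publishCounter := publishCounter s; mem := mem s;
         ghostRetired := ghostRetired s; ghostFreed := ghostFreed s |}
| StOpEnd s t :
    active s t -> ready s t ->
    step s (LOpEnd t)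
      {| gEpoch := gEpoch s; reservedEpoch := upd (reservedEpoch s) t RMax;
         active := upd (active s) t false;
         localRes := upd (localRes s) t (fun _ => None);
         pendRead := pendRead s; retireList := retireList s; phase := phase s;
         sigPending := sigPending s; publishedRes := publishedRes s;
         publishCounter := publishCounter s; mem := mem s;
         ghostRetired := ghostRetired s; ghostFreed := ghostFreed s |}
| StReadStart s t (i : 'I_K) a :
    active s t -> ready s t -> addr_ok s t None a ->
    step s (LReadStart t i a)
      {| gEpoch := gEpoch s; reservedEpoch := reservedEpoch s;
         active := active s;
         localRes := upd (localRes s) t (upd (localRes s t) i (mem s a));
         pendRead := upd (pendRead s) t (Some (i, a));
         retireList := retireList s; phase := phase s;
         sigPending := sigPending s; publishedRes := publishedRes s;
         publishCounter := publishCounter s; mem := mem s;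
         ghostRetired := ghostRetired s; ghostFreed := ghostFreed s |}
| StReadValidate s t (i : 'I_K) a :
    pendRead s t = Some (i, a) -> addr_ok s t (Some i) a ->
    let ok := mem s a == localRes s t i in
    step s (LReadValidate t a)
      {| gEpoch := gEpoch s; reservedEpoch := reservedEpoch s;
         active := active s;
         localRes := if ok then localRes s
                     else upd (localRes s) t (upd (localRes s t) i (mem s a));
         pendRead := if ok then upd (pendRead s) t None else pendRead s;
         retireList := retireList s; phase := phase s;
         sigPending := sigPending s; publishedRes := publishedRes s;
         publishCounter := publishCounter s; mem := mem s;
         ghostRetired := ghostRetired s; ghostFreed := ghostFreed s |}
| StWrite s t a v :
    active s t -> ready s t -> addr_ok s t None a ->
    step s (LWrite t a v)
      {| gEpoch := gEpoch s; reservedEpoch := reservedEpoch s;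
         active := active s; localRes := localRes s;
         pendRead := pendRead s; retireList := retireList s; phase := phase s;
         sigPending := sigPending s; publishedRes := publishedRes s;
         publishCounter := publishCounter s; mem := upd (mem s) a v;
         ghostRetired := ghostRetired s; ghostFreed := ghostFreed s |}
| StDeref s t n :
    active s t -> ready s t -> holds_except s t None n ->
    step s (LDeref t n) s
| StRetire s t n :
    active s t -> ready s t ->
    step s (LRetire t n)
      {| gEpoch := gEpoch s; reservedEpoch := reservedEpoch s;
         active := active s; localRes := localRes s;
         pendRead := pendRead s;
         retireList := upd (retireList s) t (rcons (retireList s t) (n, gEpoch s));
         phase := phase s;
         sigPending := sigPending s; publishedRes := publishedRes s;
         publishCounter := publishCounter s; mem := mem s;
         ghostRetired := n :: ghostRetired s; ghostFreed := ghostFreed s |}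
| StEpochReclaim s t :
    ready s t ->
    let L := retireList s t in
    let fr := fun p : Node * nat => epoch_freeable s p.2 in
    step s (LEpochReclaim t)
      {| gEpoch := gEpoch s; reservedEpoch := reservedEpoch s;
         active := active s; localRes := localRes s;
         pendRead := pendRead s;
         retireList := upd (retireList s) t [seq p <- L | ~~ fr p];
         phase := phase s;
         sigPending := sigPending s; publishedRes := publishedRes s;
         publishCounter := publishCounter s; mem := mem s;
         ghostRetired := ghostRetired s;
         ghostFreed := [seq p.1 | p <- L & fr p] ++ ghostFreed s |}
| StSignalStart s t :
    ready s t -> mult * threshold <= size (retireList s t) ->
    step s (LSignalStart t)
      {| gEpoch := gEpoch s; reservedEpoch := reservedEpoch s;
         active := active s; localRes := localRes s;
         pendRead := pendRead s; retireList := retireList s;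
         phase := upd (phase s) t (Waiting (publishCounter s));
         sigPending := fun u => if u == t then sigPending s u else true;
         publishedRes := publishedRes s;
         publishCounter := publishCounter s; mem := mem s;
         ghostRetired := ghostRetired s; ghostFreed := ghostFreed s |}
| StHandler s t :
    sigPending s t ->
    step s (LHandler t)
      {| gEpoch := gEpoch s; reservedEpoch := reservedEpoch s;
         active := active s; localRes := localRes s;
         pendRead := pendRead s; retireList := retireList s;
         phase := phase s;
         sigPending := upd (sigPending s) t false;
         publishedRes := upd (publishedRes s) t (localRes s t);
         publishCounter := upd (publishCounter s) t (publishCounter s t).+1;
         mem := mem s;
         ghostRetired := ghostRetired s; ghostFreed := ghostFreed s |}
| StSignalFree s t rec :
    phase s t = Waiting rec ->
    (forall u, u != t -> rec u < publishCounter s u) ->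
    let L := retireList s t in
    let fr := fun p : Node * nat => signal_freeable s t p.1 in
    step s (LSignalFree t)
      {| gEpoch := gEpoch s; reservedEpoch := reservedEpoch s;
         active := active s; localRes := localRes s;
         pendRead := pendRead s;
         retireList := upd (retireList s) t [seq p <- L | ~~ fr p];
         phase := upd (phase s) t Idle;
         sigPending := sigPending s; publishedRes := publishedRes s;
         publishCounter := publishCounter s; mem := mem s;
         ghostRetired := ghostRetired s;
         ghostFreed := [seq p.1 | p <- L & fr p] ++ ghostFreed s |}.

(* Usage assumptions of the data structure on a step taken from [s]:
   - each node is retired (by exactly one thread) at most once;
   - hazard-pointer style usage: when a read validates successfully and
     returns a node, that node has not been retired at validation time. *)
Definition usage_ok (s : state N K) (l : label) : Prop :=
  match l with
  | LRetire _ n => n \notin ghostRetired s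
  | LReadValidate t a =>
      forall (i : 'I_K) (n : Node),
        pendRead s t = Some (i, a) -> mem s a = localRes s t i ->
        mem s a = Some n -> n \notin ghostRetired s
  | _ => True
  end.

Inductive reachable (m0 : Addr -> option Node) : state N K -> Prop :=
| ReachInit : reachable m0 (init_state N K m0)
| ReachStep s l s' : reachable m0 s -> step s l s' -> usage_ok s l ->
    reachable m0 s'.

End Model.

(* Main.v *)
Require Import Defs.
From mathcomp Require Import all_boot.

Set Implicit Arguments.
Unset Strict Implicit.
Unset Printing Implicit Defensive.

Section Proof.
Variables (N K mult threshold : nat).

Definition pok (s : state N K) (t : 'I_N) (j : 'I_K) : bool :=
  if pendRead s t is Some p then p.1 != j else true.

Definition vld (s : state N K) t j n := localRes s t j = Some n /\ pok s t j.

Record Inv (s : state N K) : Prop := {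
 i_free : forall t j n, vld s t j n -> n \notin ghostFreed s;
 i_loc : forall t j n, localRes s t j = Some n -> active s t;
 i_pend : forall t p, pendRead s t = Some p -> active s t;
 i_act : forall t, active s t -> exists x, reservedEpoch s t = RE x /\ x <= gEpoch s;
 i_epoch : forall t j n r e, vld s t j n -> (n, e) \in retireList s r ->
     exists x, reservedEpoch s t = RE x /\ x <= e;
 i_rl : forall r p, p \in retireList s r -> p.1 \in ghostRetired s;
 i_fr : forall n, n \in ghostFreed s -> n \in ghostRetired s;
 i_sig : forall r rec u j n, phase s r = Waiting rec -> u != r ->
     rec u < publishCounter s u -> vld s u j n ->
     n \in [seq p.1 | p <- retireList s r] -> publishedRes s u j = Some n }.

Lemma inv_init m0 : Inv (init_state N K m0).
Proof. by constructor => //=. Qed.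

Ltac gen Hfree Hloc Hpend Hact Hep Hrl Hfr Hsig :=
  try (first [exact Hfree | exact Hloc | exact Hpend | exact Hact | exact Hep
             | exact Hrl | exact Hfr | exact Hsig]).

Ltac sets := match goal with |- Inv ?x => set s' := x end.

Lemma inv_step s l s' : Inv s -> step mult threshold s l s' -> usage_ok s l -> Inv s'.
Proof.
move=> I st U; destruct st; case: I => Hfree Hloc Hpend Hact Hep Hrl Hfr Hsig.
-
  constructor; gen Hfree Hloc Hpend Hact Hep Hrl Hfr Hsig.
  + move=> t' j n /= /Hloc A; rewrite /upd; by case: eqP.
  + move=> t' p /= /Hpend A; rewrite /upd; by case: eqP.
  + move=> t' /=; rewrite /upd; case: eqP => [_ _|_ /Hact [x [-> Hx]]].
      by exists e.
    exists x; split => //; apply: leq_trans Hx _; exact: leq_addr.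
  + move=> t' j n r e0 [/= Hl Hp] Hin; rewrite /upd; case: eqP => [E|_].
      by move: H; rewrite -E (Hloc _ _ _ Hl).
    exact: (Hep t' j n r e0 (conj Hl Hp) Hin).
-
  sets.
  have V : forall t' j n, vld s' t' j n -> vld s t' j n.
    move=> t' j n []; rewrite /s' /vld /= /upd; case: eqP => [_ //|_ Hl Hp].
    by split.
  constructor; gen Hfree Hloc Hpend Hact Hep Hrl Hfr Hsig.
  + move=> t' j n /V; exact: Hfree.
  + move=> t' j n; rewrite /s' /= /upd; case: eqP => [_ //|ne /Hloc //].
  + move=> t' p; rewrite /s' /= /upd; case: eqP => [->|_ /Hpend //].
    by case: H0 => ->.
  + move=> t'; rewrite /s' /= /upd; case: eqP => [_ //|_ /Hact //].
  + move=> t' j n r e0 Vd Hin; move: (V _ _ _ Vd) => Vs.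
    case: Vd => Hl _; move: Hl; rewrite /s' /= /upd; case: eqP => [_ //|_ _].
    exact: (Hep t' j n r e0 Vs Hin).
  + move=> r rec u j n Hph Hur Hc /V; exact: Hsig Hph Hur Hc.
-
  sets.
  have V : forall t' j n, vld s' t' j n -> vld s t' j n.
    move=> t' j n []; rewrite /s' /vld /pok /= /upd; case: eqP => [-> /=|_ Hl Hp]; last by split.
    move=> Hl Hp; have ji : j != i by rewrite eq_sym.
    rewrite (negbTE ji) in Hl; split => //; by case: H0 => ->.
  constructor; gen Hfree Hloc Hpend Hact Hep Hrl Hfr Hsig.
  + move=> t' j n /V; exact: Hfree.
  + move=> t' j n; rewrite /s' /= /upd; case: eqP => [-> //|_ /Hloc //].
  + move=> t' p; rewrite /s' /= /upd; case: eqP => [-> //|_ /Hpend //].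
  + move=> t' j n r e0 /V; exact: Hep.
  + move=> r rec u j n Hph Hur Hc /V; exact: Hsig Hph Hur Hc.
-
  rewrite /ok; case: eqP => E.
  + sets.
    have V : forall t' j n, vld s' t' j n -> vld s t' j n \/ n \notin ghostRetired s.
      move=> t' j n []; rewrite /s' /vld /pok /= /upd; case: eqP => [->|_ Hl Hp]; last by left.
      move=> Hl _; have [ji|ji] := eqVneq j i.
        right; subst j; apply: (U i n H E); by rewrite E.
      left; split => //; by rewrite H /= eq_sym.
    constructor; gen Hfree Hloc Hpend Hact Hep Hrl Hfr Hsig.
    * move=> t' j n /V [/Hfree //|NR]; apply: contra NR; exact: Hfr.
    * move=> t' p; rewrite /s' /= /upd; case: eqP => // _; exact: Hpend.
    * move=> t' j n r e0 /V [Vd|NR] Hin; first exact: Hep Vd Hin.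
      by move: (Hrl _ _ Hin) => /=; rewrite (negbTE NR).
    * move=> r rec u j n Hph Hur Hc /V [Vd|NR] Hin; first exact: Hsig Hph Hur Hc Vd Hin.
      case/mapP: Hin => p Hp E'; move: NR; by rewrite E' (Hrl _ _ Hp).
  + sets.
    have V : forall t' j n, vld s' t' j n -> vld s t' j n.
      move=> t' j n []; rewrite /s' /vld /pok /= /upd; case: eqP => [->|_ Hl Hp]; last by split.
      rewrite H /= => Hl Hp; have ji : j != i by rewrite eq_sym.
      rewrite (negbTE ji) in Hl; split => //; by rewrite H.
    constructor; gen Hfree Hloc Hpend Hact Hep Hrl Hfr Hsig.
    * move=> t' j n /V; exact: Hfree.
    * move=> t' j n; rewrite /s' /= /upd; case: eqP => [-> _|_ /Hloc //]; exact: Hpend H.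
    * move=> t' j n r e0 /V; exact: Hep.
    * move=> r rec u j n Hph Hur Hc /V; exact: Hsig Hph Hur Hc.
-
  constructor; gen Hfree Hloc Hpend Hact Hep Hrl Hfr Hsig.
-
  by constructor.
-
  constructor; gen Hfree Hloc Hpend Hact Hep Hrl Hfr Hsig.
  + move=> t' j n0 r e Vd; rewrite /= /upd; case: eqP => [_|_]; last exact: Hep Vd.
    rewrite mem_rcons in_cons; case/orP => [/eqP [_ ->]|]; last exact: Hep Vd.
    case: Vd => Hl _; exact: Hact (Hloc _ _ _ Hl).
  + move=> r p Hp; suff: p = (n, gEpoch s) \/ p \in retireList s r.
      case=> [->|/Hrl]; rewrite /= in_cons; first by rewrite eqxx.
      by move=> ->; rewrite orbT.
    move: Hp; rewrite /= /upd; case: eqP => [->|_] /=; last by right.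
    by rewrite mem_rcons in_cons => /orP [/eqP|]; [left|right].
  + move=> n0 /Hfr; rewrite /= in_cons => ->; by rewrite orbT.
  + move=> r rec u j n0 Hph Hur Hc Vd; rewrite /= /upd; case: eqP => [E|_]; last exact: Hsig Hph Hur Hc Vd.
    by case: H0 => _; rewrite -E Hph.
-
  sets.
  have Hsub : forall r p, p \in retireList s' r -> p \in retireList s r.
    move=> r p; rewrite /s' /= /upd; case: eqP => [->|//]; rewrite mem_filter.
    by case/andP.
  constructor; gen Hfree Hloc Hpend Hact Hep Hrl Hfr Hsig.
  + move=> t' j n Vd; rewrite /s' /= mem_cat negb_or (Hfree _ _ _ Vd) andbT.
    apply/mapP => -[p]; rewrite mem_filter => /andP [Hf HpL] E.
    have Hin : (n, p.2) \in retireList s t by rewrite E -surjective_pairing.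
    case: (Hep _ _ _ _ _ Vd Hin) => x [Hx Hle].
    move: Hf; rewrite /fr /epoch_freeable => /forallP /(_ t'); rewrite Hx /= => Hlt.
    by move: (leq_trans Hlt Hle); rewrite ltnn.
  + move=> t' j n r e Vd /Hsub; exact: Hep Vd.
  + move=> r p /Hsub; exact: Hrl.
  + move=> n; rewrite /s' /= mem_cat => /orP [/mapP [p] |/Hfr //].
    rewrite mem_filter => /andP [_ Hp] ->; exact: Hrl Hp.
  + move=> r rec u j n Hph Hur Hc Vd; rewrite /s' /= /upd; case: eqP => [E|_]; last exact: Hsig Hph Hur Hc Vd.
    by case: H => _; rewrite -E Hph.
-
  constructor; gen Hfree Hloc Hpend Hact Hep Hrl Hfr Hsig.
  move=> r rec u j n; rewrite /= /upd; case: eqP => [_ [<-] _|_ Hph]; last exact: Hsig Hph.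
  by rewrite ltnn.
-
  constructor; gen Hfree Hloc Hpend Hact Hep Hrl Hfr Hsig.
  move=> r rec u j n Hph Hur; rewrite /= /upd; case: eqP => [->|_ Hc Vd]; last exact: Hsig Hph Hur Hc Vd.
  by move=> _ [Hl _] _.
-
  sets.
  have Hsub : forall r p, p \in retireList s' r -> p \in retireList s r.
    move=> r p; rewrite /s' /= /upd; case: eqP => [->|//]; rewrite mem_filter.
    by case/andP.
  constructor; gen Hfree Hloc Hpend Hact Hep Hrl Hfr Hsig.
  + move=> t' j n Vd; rewrite /s' /= mem_cat negb_or (Hfree _ _ _ Vd) andbT.
    apply/mapP => -[p]; rewrite mem_filter => /andP [Hf HpL] E.
    move: Hf; rewrite /fr /signal_freeable => /andP [/forallP H1 /forallP H2].
    case: Vd => Hl Hp.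
    have [E'|ne] := eqVneq t' t.
      by move: (H2 j); rewrite -E -E' Hl eqxx.
    have Pub := Hsig t rec t' j n H ne (H0 t' ne) (conj Hl Hp) (etrans (congr1 _ E) (map_f _ HpL)).
    move: (H1 t'); rewrite ne /= => /forallP /(_ j); by rewrite Pub -E eqxx.
  + move=> t' j n r e Vd /Hsub; exact: Hep Vd.
  + move=> r p /Hsub; exact: Hrl.
  + move=> n; rewrite /s' /= mem_cat => /orP [/mapP [p] |/Hfr //].
    rewrite mem_filter => /andP [_ Hp] ->; exact: Hrl Hp.
  + move=> r rec' u j n; rewrite /s' /= /upd; case: eqP => [_ //|_ Hph]; exact: Hsig Hph.
Qed.

End Proof.

Theorem mainTheorem10 (N K mult threshold : nat) (m0 : Addr -> option Node)
    (s : state N K) (l : label N K) (s' : state N K) (n : Node) :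
  reachable mult threshold m0 s ->
  step mult threshold s l s' ->
  usage_ok s l ->
  accessed l = Some n ->
  n \notin ghostFreed s.
Proof.
move=> R st _ Hacc.
have I : Inv s.
  elim: R => [|s0 l0 s1 _ IH st0 U0]; first exact: inv_init.
  exact: inv_step IH st0 U0.
case: I => Hfree _ _ _ _ _ _ _.
destruct st => //=; move: Hacc => /=.
- case: a H1 => [[m|] k] //= [j [_ Hj]] [<-]; apply: (Hfree t j).
  by split => //; rewrite /pok; case: H0 => ->.
- clear ok; move: H H0; case: a => [[m|] k] //= Hp [j [Hji Hj]] [<-]; apply: (Hfree t j).
  by split => //; rewrite /pok Hp /=; apply: contraNneq Hji => ->.
- case: a H1 => [[m|] k] //= [j [_ Hj]] [<-]; apply: (Hfree t j).
  by split => //; rewrite /pok; case: H0 => ->.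
- move=> [<-]; case: H1 => j [_ Hj]; apply: (Hfree t j).
  by split => //; rewrite /pok; case: H0 => ->.
Qed.
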